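(* Let $P$ be a finite set of points in the plane, and call $X\subseteq P$ a clique if the unit disks $D(p,1)$, $p\in X$, pairwise intersect (equivalently, all pairwise distances in $X$ are at most $2$). Let $\mathcal{G}$ be a regular axis-parallel square grid whose cells have diameter $2$, let $C$ be a grid cell containing at least one point of $P$, let $C^+$ be the $5\times 5$ block of grid cells whose central cell is $C$, and let $P_C$ be the set of points of $P$ lying in some cell of $C^+$. Let $\varepsilon>0$. Choose $p_1,p_2\in P_C$ independently and uniformly at random. Let $s$ be the line segment of length $2$ starting at $p_2$ and directed toward $p_1$, let $x$ be its other endpoint, let $L=D(x,2)\cap D(p_2,2)$, and let $P_L=L\cap P_C$. Let $X\subseteq P_L$ be a clique with $|X|\ge(1-\varepsilon/2)|Y^*|$, where $Y^*$ is a maximum clique in $P_L$. Let $X^*$ be a maximum clique in $P_C$. Then there is an absolute constant $c>0$ such that, with probability at least $c\,\varepsilon$ (over the choice of $p_1,p_2$), $|X|\ge(1-\varepsilon)|X^*|$.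
   Context: $D(p,r)$ denotes the closed disk with center $p$ and radius $r$. Grid cells are closed squares. If $p_1=p_2$, the direction of $s$ is arbitrary. *)

(* Defs.v *)
From HB Require Import structures.
From mathcomp Require Import all_boot all_order all_algebra reals.
Set Implicit Arguments. Unset Strict Implicit. Unset Printing Implicit Defensive.
Import Order.TTheory GRing.Theory Num.Theory.
Local Open Scope ring_scope.

Section Defs.
Variable R : realType.
Notation pt := (R * R)%type.

Definition dist (p q : pt) : R :=
  Num.sqrt ((p.1 - q.1) ^+ 2 + (p.2 - q.2) ^+ 2).

Definition in_disk (c : pt) (r : R) (p : pt) : bool := dist c p <= r.

(* A point set is given as an (injective) indexing P : 'I_n -> pt;
   subsets of the point set are {set 'I_n}. *)
Definition clique n (P : 'I_n -> pt) (X : {set 'I_n}) : Prop :=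
  forall i j, i \in X -> j \in X -> dist (P i) (P j) <= 2.

Definition is_max_clique n (P : 'I_n -> pt) (S Y : {set 'I_n}) : Prop :=
  [/\ Y \subset S, clique P Y &
      forall Z : {set 'I_n}, Z \subset S -> clique P Z -> #|Z| <= #|Y| ]%N.

(* Regular axis-parallel square grid with cells of diameter 2, i.e. side
   length sqrt 2, placed with a corner at origin o. *)
Definition cell_side : R := Num.sqrt 2.

Definition in_cell (o : pt) (i j : int) (p : pt) : bool :=
  (o.1 + i%:~R * cell_side <= p.1 <= o.1 + (i + 1)%:~R * cell_side) &&
  (o.2 + j%:~R * cell_side <= p.2 <= o.2 + (j + 1)%:~R * cell_side).

Definition in_block5 (o : pt) (i j : int) (p : pt) : bool :=
  [exists di : 'I_5, exists dj : 'I_5,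
     in_cell o (i + (di : nat)%:Z - 2) (j + (dj : nat)%:Z - 2) p].

Definition PC n (P : 'I_n -> pt) (o : pt) (i j : int) : {set 'I_n} :=
  [set k | in_block5 o i j (P k)].

(* other endpoint x of the segment s of length 2 starting at p2 directed
   toward p1; if p1 = p2 the (arbitrary) unit direction u is used. *)
Definition seg_end (p1 p2 u : pt) : pt :=
  if p1 == p2 then (p2.1 + 2 * u.1, p2.2 + 2 * u.2)
  else (p2.1 + 2 / dist p1 p2 * (p1.1 - p2.1),
        p2.2 + 2 / dist p1 p2 * (p1.2 - p2.2)).

Definition PL n (P : 'I_n -> pt) (PCs : {set 'I_n}) (p1 p2 u : pt) : {set 'I_n} :=
  [set k in PCs | in_disk (seg_end p1 p2 u) 2 (P k) && in_disk p2 2 (P k)].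

End Defs.

(* Main.v *)
Require Import Defs.
From HB Require Import structures.
From mathcomp Require Import all_boot all_order all_algebra reals ring lra.
Import Order.TTheory GRing.Theory Num.Theory.
Local Open Scope ring_scope.

Lemma sqrt_le2 (R : realType) (A : R) : A <= 4 -> Num.sqrt A <= 2.
Proof.
move=> h; have -> : (2 : R) = Num.sqrt (2 ^+ 2) by rewrite sqrtr_sqr ger0_norm.
case: (lerP 0 A) => hA.
  by rewrite ler_sqrt //; lra.
by rewrite ltr0_sqrtr // sqrtr_ge0.
Qed.

Lemma sqrt_le_inv (R : realType) (A B : R) : 0 <= A -> 0 <= B ->
  Num.sqrt A <= Num.sqrt B -> A <= B.
Proof. by move=> hA hB; rewrite ler_sqrt. Qed.

Lemma seg_lemma (R : realType) (a b q u : R * R) :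
  u.1 ^+ 2 + u.2 ^+ 2 = 1 ->
  dist a b <= 2 -> dist a q <= dist a b ->
  dist (seg_end a b u) q <= 2.
Proof.
move=> hu hab haq; rewrite /seg_end; case: eqP => [eab|nab].
  have hq : dist a q <= 0 by rewrite eab /dist !subrr expr0n /= addr0 sqrtr0 in haq *.
  move: hq; rewrite /dist => hq.
  have hq0 : (a.1 - q.1) ^+ 2 + (a.2 - q.2) ^+ 2 <= 0.
    apply: sqrt_le_inv; rewrite ?addr_ge0 ?sqr_ge0 //.
    by rewrite sqrtr0.
  apply: sqrt_le2 => /=; subst b.
  have s1 := sqr_ge0 (a.1 - q.1); have s2 := sqr_ge0 (a.2 - q.2).
  have h1 : (a.1 - q.1) ^+ 2 = 0 by apply/eqP; rewrite eq_le sqr_ge0 andbT; lra.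
  have h2 : (a.2 - q.2) ^+ 2 = 0 by apply/eqP; rewrite eq_le sqr_ge0 andbT; lra.
  move/eqP: h1; rewrite sqrf_eq0 subr_eq0 => /eqP h1.
  move/eqP: h2; rewrite sqrf_eq0 subr_eq0 => /eqP h2.
  rewrite -h1 -h2; nra.
set d := dist a b.
have hd0 : 0 < d.
  rewrite /d /dist sqrtr_gt0 lt_def addr_ge0 ?sqr_ge0 // andbT.
  apply/eqP => h; apply: nab.
  have s1 := sqr_ge0 (a.1 - b.1); have s2 := sqr_ge0 (a.2 - b.2).
  have h1 : (a.1 - b.1) ^+ 2 = 0 by apply/eqP; rewrite eq_le sqr_ge0 andbT; lra.
  have h2 : (a.2 - b.2) ^+ 2 = 0 by apply/eqP; rewrite eq_le sqr_ge0 andbT; lra.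
  move/eqP: h1; rewrite sqrf_eq0 subr_eq0 => /eqP h1.
  move/eqP: h2; rewrite sqrf_eq0 subr_eq0 => /eqP h2.
  by move: h1 h2; case: (a) (b) => [? ?] [? ?] /= -> ->.
have hd2 : d ^+ 2 = (a.1 - b.1) ^+ 2 + (a.2 - b.2) ^+ 2.
  by rewrite /d /dist sqr_sqrtr // addr_ge0 ?sqr_ge0.
have hw : (a.1 - q.1) ^+ 2 + (a.2 - q.2) ^+ 2 <= d ^+ 2.
  rewrite hd2; apply: sqrt_le_inv; rewrite ?addr_ge0 ?sqr_ge0 //.
set t := 2 / d.
have ht : t * d = 2 by rewrite /t mulrVK // unitfE gt_eqF.
have ht1 : 1 <= t by rewrite /t ler_pdivlMr //; rewrite mul1r.
apply: sqrt_le2 => /=.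
set w1 := q.1 - b.1; set w2 := q.2 - b.2; set e1 := a.1 - b.1; set e2 := a.2 - b.2.
have E1 : a.1 - q.1 = e1 - w1 by rewrite /e1 /w1; ring.
have E2 : a.2 - q.2 = e2 - w2 by rewrite /e2 /w2; ring.
have F1 : b.1 + t * (a.1 - b.1) - q.1 = t * e1 - w1 by rewrite /e1 /w1; ring.
have F2 : b.2 + t * (a.2 - b.2) - q.2 = t * e2 - w2 by rewrite /e2 /w2; ring.
rewrite F1 F2.
rewrite E1 E2 in hw; rewrite -/e1 -/e2 in hd2.
have hdot : w1 ^+ 2 + w2 ^+ 2 <= 2 * (w1 * e1 + w2 * e2) by nra.
have hdot0 : 0 <= w1 * e1 + w2 * e2 by nra.
have htd : t ^+ 2 * d ^+ 2 = 4 by rewrite -exprMn ht; ring.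
have : (t * e1 - w1) ^+ 2 + (t * e2 - w2) ^+ 2
   = t ^+ 2 * d ^+ 2 - 2 * t * (w1 * e1 + w2 * e2) + (w1 ^+ 2 + w2 ^+ 2).
  by rewrite hd2; ring.
move=> ->; rewrite htd; nra.
Qed.
Lemma cell_clique (R : realType) (o : R * R) a b (p q : R * R) :
  in_cell o a b p -> in_cell o a b q -> dist p q <= 2.
Proof.
rewrite /in_cell !rmorphD /= => /andP[/andP[p1 p2] /andP[p3 p4]] /andP[/andP[q1 q2] /andP[q3 q4]].
have hs : cell_side R ^+ 2 = 2 by rewrite /cell_side sqr_sqrtr.
have hs0 : 0 <= cell_side R by apply: sqrtr_ge0.
apply: sqrt_le2.
set s := cell_side R in hs hs0 p1 p2 p3 p4 q1 q2 q3 q4 *.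
have e1 : (1%:~R : R) = 1 by [].
rewrite e1 in p2 p4 q2 q4.
have u1 : (p.1 - q.1) ^+ 2 <= s ^+ 2.
  rewrite -[_ <= _]ler_sqrt ?sqr_ge0 // !sqrtr_sqr (ger0_norm hs0).
  rewrite ler_norml; apply/andP; split; lra.
have u2 : (p.2 - q.2) ^+ 2 <= s ^+ 2.
  rewrite -[_ <= _]ler_sqrt ?sqr_ge0 // !sqrtr_sqr (ger0_norm hs0).
  rewrite ler_norml; apply/andP; split; lra.
lra.
Qed.

Lemma sum_in_card (T : finType) (A : {set T}) : (\sum_(k : T) ((k \in A) : nat))%N = #|A|.
Proof. by rewrite -sum1_card [RHS]big_mkcond /=; apply: eq_bigr => k _; case: (k \in A). Qed.

Definition cliqueb (R : realType) n (P : 'I_n -> R * R) (Z : {set 'I_n}) : bool :=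
  [forall x in Z, forall y in Z, dist (P x) (P y) <= 2].
Arguments cliqueb {R n} P Z.

Lemma cliquebP (R : realType) n (P : 'I_n -> R * R) Z : reflect (clique P Z) (cliqueb P Z).
Proof.
apply: (iffP idP).
  by move=> /forall_inP h x y hx hy; move: (h x hx) => /forall_inP; apply.
by move=> h; apply/forall_inP => x hx; apply/forall_inP => y hy; apply: h.
Qed.

Lemma ex_max_clique (R : realType) n (P : 'I_n -> R * R) S : exists Y, is_max_clique P S Y.
Proof.
have h0 : (set0 \subset S) && cliqueb P set0.
  by rewrite sub0set /=; apply/cliquebP => x y; rewrite inE.
case: (@arg_maxnP _ set0 (fun Z : {set 'I_n} => (Z \subset S) && cliqueb P Z) (fun Z : {set 'I_n} => #|Z|) h0) => Y /andP[hYS /cliquebP hY] hmax.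
exists Y; split => // Z hZ /cliquebP hZc; apply: hmax; by rewrite hZ.
Qed.

Theorem lemma7 :
  exists c : rat, 0 < c /\
  forall (R' : realType) (n : nat) (P : 'I_n -> R' * R'),
  injective P ->
  forall (o : R' * R') (i j : int),
  (exists k : 'I_n, in_cell o i j (P k)) ->
  forall eps : R', 0 < eps -> eps < 1 ->
  (* arbitrary unit direction used when p1 = p2 *)
  forall u : 'I_n -> R' * R', (forall k, (u k).1 ^+ 2 + (u k).2 ^+ 2 = 1) ->
  (* X p1 p2 : the clique chosen in P_L for the sample (p1, p2) *)
  forall X : 'I_n -> 'I_n -> {set 'I_n},
  (forall p1 p2, p1 \in PC P o i j -> p2 \in PC P o i j ->
     let L := PL P (PC P o i j) (P p1) (P p2) (u p2) in
     [/\ X p1 p2 \subset L, clique P (X p1 p2) &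
        forall Y, is_max_clique P L Y ->
          (1 - eps / 2) * (#|Y|%:R) <= (#|X p1 p2|%:R : R')]) ->
  forall Xstar : {set 'I_n}, is_max_clique P (PC P o i j) Xstar ->
  ratr c * eps * (#|PC P o i j| ^ 2)%:R <=
  (#|[set pr : 'I_n * 'I_n | [&& pr.1 \in PC P o i j, pr.2 \in PC P o i j &
        (1 - eps) * (#|Xstar|%:R) <= (#|X pr.1 pr.2|%:R : R')]]|)%:R.
Proof.
exists (1250%:R)^-1; split; first by rewrite invr_gt0 ltr0n.
move=> R n P _ o i j _ eps he0 he1 u hu X hX Xstar [hXS hXc hXmax].
set PCs := PC P o i j.
set m := #|Xstar|.
have step1 : (#|PCs| <= 25 * m)%N.
  pose Ac (c : 'I_5 * 'I_5) := [set k in PCs |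
       in_cell o (i + (c.1 : nat)%:Z - 2) (j + (c.2 : nat)%:Z - 2) (P k)].
  have hAc c : (#|Ac c| <= m)%N.
    apply: hXmax; first by apply/subsetP => k; rewrite inE => /andP[].
    move=> x y; rewrite !inE => /andP[_ hx] /andP[_ hy]; exact: cell_clique hx hy.
  apply: (@leq_trans (\sum_(c : 'I_5 * 'I_5) #|Ac c|)).
    rewrite -sum_in_card.
    apply: (@leq_trans (\sum_(k : 'I_n) \sum_(c : 'I_5 * 'I_5) ((k \in Ac c) : nat))).
      apply: leq_sum => k _.
      case hk: (k \in PCs) => //.
      move: (hk); rewrite inE => /existsP[di /existsP[dj hc]].
      rewrite (bigD1 (di, dj)) //= inE hk hc /=.
      by rewrite leq_addr.
    rewrite exchange_big /=; apply: leq_sum => c _; by rewrite sum_in_card.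
  apply: (@leq_trans (\sum_(c : 'I_5 * 'I_5) m)).
    by apply: leq_sum => c _; apply: hAc.
  by rewrite sum_nat_const card_prod card_ord.
have hXPC : {subset Xstar <= PCs} by apply/subsetP.
pose far a b := [set q in Xstar | dist (P a) (P b) < dist (P a) (P q)].
pose S a := [set b in Xstar | (#|far a b|%:R : R) < eps * m%:R / 2].
have m0 : (0 : R) <= m%:R by [].
have step2 a : eps * m%:R / 2 <= (#|S a|%:R : R).
  pose T := [set b in Xstar | b \notin S a].
  case: (set_0Vmem T) => [T0 | [t0 Ht0]].
    have : (m <= #|S a|)%N.
      apply: subset_leq_card; apply/subsetP => b hb.
      apply/negPn/negP => hn.
      have : b \in T by rewrite inE hb hn.
      by rewrite T0 inE.
    rewrite -(ler_nat R) => h.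
    apply: le_trans h; nra.
  case: (@arg_maxP _ _ _ t0 (fun b => b \in T) (fun b => dist (P a) (P b)) Ht0) => bs hbs hmax.
  move: (hbs); rewrite inE => /andP[hbsX hbsS].
  have hsub : far a bs \subset S a.
    apply/subsetP => q; rewrite inE => /andP[hq hlt].
    apply/negPn/negP => hn.
    have : q \in T by rewrite inE hq hn.
    move/hmax => /= hh.
    by move: hh; rewrite leNgt hlt.
  have hle : (#|far a bs| <= #|S a|)%N by apply: subset_leq_card.
  rewrite -(ler_nat R) in hle.
  apply: le_trans hle.
  move: hbsS; rewrite inE hbsX /= -leNgt //.
have step3 a b : a \in Xstar -> b \in S a -> (1 - eps) * m%:R <= (#|X a b|%:R : R).
  move=> ha; rewrite inE => /andP[hb hf].
  have [hXsub hXcl hXY] := hX a b (hXPC a ha) (hXPC b hb).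
  set L := PL P PCs (P a) (P b) (u b) in hXsub hXY.
  have [Y hY] := @ex_max_clique R n P L.
  have hXY' := hXY Y hY.
  case: hY => hYL hYc hYmax.
  have hZ : (#|Xstar :&: L| <= #|Y|)%N.
    apply: hYmax; first by apply: subsetIr.
    by move=> x y; rewrite !inE => /andP[hx _] /andP[hy _]; apply: hXc.
  have hD : (#|Xstar :\: L| <= #|far a b|)%N.
    apply: subset_leq_card; apply/subsetP => q; rewrite !inE => /andP[hqL hq].
    rewrite hq /=; rewrite ltNge; apply: contra hqL => hle.
    apply/and3P; split.
    - by move: (hXPC q hq); rewrite inE.
    - by apply: seg_lemma => //; apply: hXc.
    - exact: hXc.
  have hm : (m <= #|Y| + #|far a b|)%N.
    by rewrite /m -(cardsID L Xstar); apply: leq_add.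
  rewrite -(ler_nat R) natrD in hm.
  have hYm : m%:R - eps * m%:R / 2 <= (#|Y|%:R : R) by lra.
  have he2 : 0 <= 1 - eps / 2 by lra.
  have := ler_wpM2l he2 hYm.
  nra.
set G := [set pr : 'I_n * 'I_n | _].
pose H := [set pr : 'I_n * 'I_n | (pr.1 \in Xstar) && (pr.2 \in S pr.1)].
have hHG : H \subset G.
  apply/subsetP => -[a b]; rewrite inE /= => /andP[ha hb].
  have hb' : b \in Xstar by move: hb; rewrite inE => /andP[].
  rewrite inE /=; apply/and3P; split.
  - exact: hXPC.
  - exact: hXPC.
  - exact: step3.
have hH : #|H| = (\sum_(a in Xstar) #|S a|)%N.
  rewrite -sum_in_card.
  have -> : (\sum_(k : 'I_n * 'I_n) ((k \in H) : nat))%N =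
     (\sum_(a : 'I_n) \sum_(b : 'I_n) (((a, b) \in H) : nat))%N.
    by rewrite pair_bigA; apply: eq_bigr => -[a b].
  rewrite [RHS]big_mkcond /=; apply: eq_bigr => a _.
  case ha: (a \in Xstar).
    rewrite -sum_in_card; apply: eq_bigr => b _; by rewrite !inE /= ha.
  by rewrite big1 // => b _; rewrite !inE /= ha.
have step4 : m%:R * (eps * m%:R / 2) <= (#|G|%:R : R).
  apply: (@le_trans _ _ (#|H|%:R)); last by rewrite ler_nat subset_leq_card.
  rewrite hH natr_sum.
  apply: (@le_trans _ _ (\sum_(a in Xstar) (eps * m%:R / 2))).
    by rewrite sumr_const mulr_natl.
  by apply: ler_sum => a _; apply: step2.
have hN : (#|PCs|%:R : R) <= 25 * m%:R.
  by rewrite -natrM ler_nat.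
have hN0 : (0 : R) <= #|PCs|%:R by [].
rewrite fmorphV.
rewrite rmorph_nat natrX.
apply: le_trans step4.
have hN2 : (#|PCs|%:R : R) ^+ 2 <= 625 * m%:R ^+ 2.
  have := ler_pM hN0 hN0 hN hN; nra.
rewrite -mulrA; rewrite ler_pdivrMl; last by rewrite ltr0n.
nra.
Qed.
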